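(* Let $P=(V;\leq)$ be a poset and let $L=(V;\sqsubseteq)$ be a linear extension of $P$ such that whenever $x<y$ in $P$ there is $z\in V$ with $x\sqsubset z\sqsubset y$ and $z$ incomparable in $P$ to both $x$ and $y$. Then there is a poset $Q$ on the set $V\times\{0,1,2\}$ whose restriction to $V\times\{1\}$ is isomorphic to $P$ and whose restrictions to $V\times\{0\}$ and to $V\times\{2\}$ are isomorphic to $L$ (so $Q$ is a union of a copy of $P$ and two copies of $L$), such that $\bigcup AM_3(Q)=Q$ and $AM_3(Q)$ is isomorphic to $L$.
   Context: A linear extension of $P$ is a linear order on $V$ containing $\leq$. $AM_3(Q)$ is the set of three-element maximal antichains of $Q$, ordered by domination ($X\leq Y$ iff each $x\in X$ is below some $y\in Y$), and $\bigcup AM_3(Q)$ is the union of these antichains. *)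

(* Defs.v *)
From Stdlib Require Import Classical.

Set Implicit Arguments.

Definition is_poset (T : Type) (le : T -> T -> Prop) : Prop :=
  (forall x, le x x) /\
  (forall x y, le x y -> le y x -> x = y) /\
  (forall x y z, le x y -> le y z -> le x z).

Definition is_linear_order (T : Type) (le : T -> T -> Prop) : Prop :=
  is_poset le /\ (forall x y, le x y \/ le y x).

Definition linear_extension (T : Type) (le lin : T -> T -> Prop) : Prop :=
  is_linear_order lin /\ (forall x y, le x y -> lin x y).

Definition strict (T : Type) (le : T -> T -> Prop) (x y : T) : Prop :=
  le x y /\ x <> y.

Definition incomparable (T : Type) (le : T -> T -> Prop) (x y : T) : Prop :=
  ~ le x y /\ ~ le y x.

Definition order_iso (A B : Type) (leA : A -> A -> Prop) (leB : B -> B -> Prop)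
    (f : A -> B) : Prop :=
  (forall x y, f x = f y -> x = y) /\
  (forall b, exists a, f a = b) /\
  (forall x y, leA x y <-> leB (f x) (f y)).

Definition isomorphic (A B : Type) (leA : A -> A -> Prop) (leB : B -> B -> Prop) : Prop :=
  exists f : A -> B, order_iso leA leB f.

Inductive layer : Type := l0 | l1 | l2.

Definition restr (V : Type) (Q : V * layer -> V * layer -> Prop) (i : layer)
    (x y : V) : Prop := Q (x, i) (y, i).

Definition set_eq (W : Type) (X Y : W -> Prop) : Prop := forall w, X w <-> Y w.

Definition antichain (W : Type) (Q : W -> W -> Prop) (X : W -> Prop) : Prop :=
  forall x y, X x -> X y -> Q x y -> x = y.

Definition max_antichain (W : Type) (Q : W -> W -> Prop) (X : W -> Prop) : Prop :=
  antichain Q X /\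
  forall Y : W -> Prop, antichain Q Y -> (forall w, X w -> Y w) -> set_eq X Y.

Definition three_elem (W : Type) (X : W -> Prop) : Prop :=
  exists a b c, a <> b /\ a <> c /\ b <> c /\ set_eq X (fun w => w = a \/ w = b \/ w = c).

Definition AM3 (W : Type) (Q : W -> W -> Prop) (X : W -> Prop) : Prop :=
  three_elem X /\ max_antichain Q X.

Definition dominated (W : Type) (Q : W -> W -> Prop) (X Y : W -> Prop) : Prop :=
  forall x, X x -> exists y, Y y /\ Q x y.

(* AM_3(Q) (sets up to extensional equality, ordered by domination) is
   order-isomorphic to (V, lin), via g : V -> AM_3(Q). *)
Definition AM3_iso (V W : Type) (Q : W -> W -> Prop) (lin : V -> V -> Prop)
    (g : V -> (W -> Prop)) : Prop :=
  (forall v, AM3 Q (g v)) /\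
  (forall X, AM3 Q X -> exists v, set_eq (g v) X) /\
  (forall u v, set_eq (g u) (g v) -> u = v) /\
  (forall u v, lin u v <-> dominated Q (g u) (g v)).

(* Main.v *)
Require Import Defs.
From Stdlib Require Import Classical.

Definition Qr (V : Type) (le lin : V -> V -> Prop) (p q : V * layer) : Prop :=
  match snd p, snd q with
  | l0, l0 => lin (fst p) (fst q)
  | l1, l1 => le (fst p) (fst q)
  | l2, l2 => lin (fst p) (fst q)
  | l1, l0 | l2, l1 | l2, l0 => strict lin (fst p) (fst q)
  | _, _ => False
  end.

Arguments Qr {V}.
Definition gA (V : Type) (v : V) : V * layer -> Prop :=
  fun w => w = (v, l0) \/ w = (v, l1) \/ w = (v, l2).

Arguments gA {V}.
Lemma pigeon (T : Type) (e1 e2 e3 x1 x2 x3 x4 : T) :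
  (x1 = e1 \/ x1 = e2 \/ x1 = e3) ->
  (x2 = e1 \/ x2 = e2 \/ x2 = e3) ->
  (x3 = e1 \/ x3 = e2 \/ x3 = e3) ->
  (x4 = e1 \/ x4 = e2 \/ x4 = e3) ->
  x1 = x2 \/ x1 = x3 \/ x1 = x4 \/ x2 = x3 \/ x2 = x4 \/ x3 = x4.
Proof.
  intros H1 H2 H3 H4.
  destruct H1 as [ -> | [ -> | -> ] ]; destruct H2 as [ -> | [ -> | -> ] ];
  destruct H3 as [ -> | [ -> | -> ] ]; destruct H4 as [ -> | [ -> | -> ] ]; tauto.
Qed.

Theorem lemma6p6 (V : Type) (le lin : V -> V -> Prop) :
  is_poset le ->
  linear_extension le lin ->
  (forall x y, strict le x y ->
     exists z, strict lin x z /\ strict lin z y /\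
               incomparable le z x /\ incomparable le z y) ->
  exists Q : V * layer -> V * layer -> Prop,
    is_poset Q /\
    isomorphic (restr Q l1) le /\
    isomorphic (restr Q l0) lin /\
    isomorphic (restr Q l2) lin /\
    (forall w : V * layer, exists X, AM3 Q X /\ X w) /\
    (exists g : V -> (V * layer -> Prop), AM3_iso Q lin g).
Proof.
  intros [Pr [Pa Pt]] [[[Lr [La Lt]] Htot] Hsub] H.
  assert (sl1 : forall a b c, lin a b -> strict lin b c -> strict lin a c).
  { intros a b c h1 [h2 h3]; split; [eauto|].
    intro e; subst; apply h3; apply La; auto. }
  assert (sl2 : forall a b c, strict lin a b -> lin b c -> strict lin a c).
  { intros a b c [h1 h3] h2; split; [eauto|].
    intro e; subst; apply h3; apply La; auto. }
  assert (slin : forall a b, strict lin a b -> lin a b) by (intros a b [h _]; exact h).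
  assert (snot : forall a b, strict lin a b -> lin b a -> False).
  { intros a b [h1 h2] h3; apply h2; apply La; auto. }
  exists (Qr le lin).
  assert (Qpo : is_poset (Qr le lin)).
  { split; [|split].
    - intros [x i]; destruct i; unfold Qr; simpl; auto.
    - intros [x i] [y j]; destruct i, j; unfold Qr; simpl; intros h1 h2;
        try contradiction; f_equal; auto.
    - intros [x i] [y j] [z k]; destruct i, j, k; unfold Qr; simpl; intros h1 h2;
        try contradiction;
        first [ solve [eauto]
              | eapply sl1; [ | eassumption ]; eauto
              | eapply sl2; [ eassumption | ]; eauto ]. }
  assert (Ganti : forall v, antichain (Qr le lin) (gA v)).
  { intros v x y Hx Hy Hq.
    destruct Hx as [ -> | [ -> | -> ] ]; destruct Hy as [ -> | [ -> | -> ] ];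
      unfold Qr in Hq; simpl in Hq; try reflexivity; try contradiction;
      destruct Hq as [_ Hne]; exfalso; apply Hne; reflexivity. }
  assert (Gmax : forall v, max_antichain (Qr le lin) (gA v)).
  { intro v; split; [apply Ganti|].
    intros Y HY sub w; split; [apply sub|].
    intro Yw. destruct w as [w i].
    destruct (classic (w = v)) as [ -> |Hne].
    { destruct i; unfold gA; auto. }
    exfalso.
    destruct i.
    - destruct (Htot w v) as [h|h].
      + assert (E := HY (w,l0) (v,l0) Yw (sub _ (or_introl eq_refl)) h); congruence.
      + assert (E := HY (v,l0) (w,l0) (sub _ (or_introl eq_refl)) Yw h); congruence.
    - destruct (Htot w v) as [h|h].
      + assert (E := HY (w,l1) (v,l0) Yw (sub _ (or_introl eq_refl)) (conj h Hne)); congruence.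
      + assert (E := HY (v,l2) (w,l1) (sub _ (or_intror (or_intror eq_refl))) Yw
                        (conj h (fun e => Hne (eq_sym e)))); congruence.
    - destruct (Htot w v) as [h|h].
      + assert (E := HY (w,l2) (v,l2) Yw (sub _ (or_intror (or_intror eq_refl))) h); congruence.
      + assert (E := HY (v,l2) (w,l2) (sub _ (or_intror (or_intror eq_refl))) Yw h); congruence. }
  assert (GAM : forall v, AM3 (Qr le lin) (gA v)).
  { intro v; split; [|apply Gmax].
    exists (v,l0), (v,l1), (v,l2).
    split; [discriminate|split; [discriminate|split; [discriminate|]]].
    intro w; unfold gA; tauto. }
  assert (min3 : forall x y z, exists m, lin m x /\ lin m y /\ lin m z).
  { intros x y z.
    destruct (Htot x y) as [hxy|hyx].
    - destruct (Htot x z) as [hxz|hzx].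
      + exists x; eauto.
      + exists z; eauto.
    - destruct (Htot y z) as [hyz|hzy].
      + exists y; eauto.
      + exists z; eauto. }
  assert (max3 : forall x y z, exists m, lin x m /\ lin y m /\ lin z m).
  { intros x y z.
    destruct (Htot x y) as [hxy|hyx].
    - destruct (Htot y z) as [hyz|hzy].
      + exists z; eauto.
      + exists y; eauto.
    - destruct (Htot x z) as [hxz|hzx].
      + exists z; eauto.
      + exists x; eauto. }
  split; [exact Qpo|].
  split.
  { exists (fun x => x); split; [auto|split; [eauto|]].
    intros; unfold restr, Qr; simpl; tauto. }
  split.
  { exists (fun x => x); split; [auto|split; [eauto|]].
    intros; unfold restr, Qr; simpl; tauto. }
  split.
  { exists (fun x => x); split; [auto|split; [eauto|]].
    intros; unfold restr, Qr; simpl; tauto. }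
  split.
  { intros [w i]; exists (gA w); split; [apply GAM|].
    destruct i; unfold gA; auto. }
  exists (@gA V).
  split; [exact GAM|].
  split; [|split].
  -
    intros X [[e1 [e2 [e3 [d12 [d13 [d23 HX]]]]]] [Xanti Xmax]].
    assert (Hl0 : exists a, X (a,l0)).
    { apply NNPP; intro Hn.
      destruct (min3 (fst e1) (fst e2) (fst e3)) as [m [m1 [m2 m3]]].
      assert (HY : antichain (Qr le lin) (fun w => X w \/ w = (m,l0))).
      { intros x y [Hx| -> ] [Hy| -> ] Hq.
        - apply Xanti; auto.
        - destruct x as [x i].
          assert (lx : lin m x).
          { destruct (proj1 (HX _) Hx) as [e|[e|e]]; rewrite <- e in *; simpl in *; auto. }
          destruct i; unfold Qr in Hq; simpl in Hq.
          + exfalso; apply Hn; eauto.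
          + exfalso; eauto.
          + exfalso; eauto.
        - destruct y as [y j]; destruct j; unfold Qr in Hq; simpl in Hq;
            try contradiction; exfalso; apply Hn; eauto.
        - reflexivity. }
      assert (E := Xmax _ HY (fun w h => or_introl h)).
      apply Hn; exists m; apply (proj2 (E (m,l0))); auto. }
    assert (Hl2 : exists b, X (b,l2)).
    { apply NNPP; intro Hn.
      destruct (max3 (fst e1) (fst e2) (fst e3)) as [m [m1 [m2 m3]]].
      assert (HY : antichain (Qr le lin) (fun w => X w \/ w = (m,l2))).
      { intros x y [Hx| -> ] [Hy| -> ] Hq.
        - apply Xanti; auto.
        - destruct x as [x i]; destruct i; unfold Qr in Hq; simpl in Hq;
            try contradiction; exfalso; apply Hn; eauto.
        - destruct y as [y j].
          assert (ly : lin y m).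
          { destruct (proj1 (HX _) Hy) as [e|[e|e]]; rewrite <- e in *; simpl in *; auto. }
          destruct j; unfold Qr in Hq; simpl in Hq.
          + exfalso; eauto.
          + exfalso; eauto.
          + exfalso; apply Hn; eauto.
        - reflexivity. }
      assert (E := Xmax _ HY (fun w h => or_introl h)).
      apply Hn; exists m; apply (proj2 (E (m,l2))); auto. }
    destruct Hl0 as [a Xa]; destruct Hl2 as [b Xb].
    assert (Hl1 : exists c, X (c,l1)).
    { apply NNPP; intro Hn.
      assert (f : forall w, X w -> w = (a,l0) \/ w = (b,l2)).
      { intros [w i] Xw; destruct i.
        - left; destruct (Htot w a) as [h|h].
          + exact (Xanti _ _ Xw Xa h).
          + exact (eq_sym (Xanti _ _ Xa Xw h)).
        - exfalso; apply Hn; eauto.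
        - right; destruct (Htot w b) as [h|h].
          + exact (Xanti _ _ Xw Xb h).
          + exact (eq_sym (Xanti _ _ Xb Xw h)). }
      assert (X1 : X e1) by (apply HX; auto).
      assert (X2 : X e2) by (apply HX; auto).
      assert (X3 : X e3) by (apply HX; auto).
      destruct (f _ X1), (f _ X2), (f _ X3); congruence. }
    destruct Hl1 as [c Xc].
    assert (memb : forall w, X w -> w = (a,l0) \/ w = (c,l1) \/ w = (b,l2)).
    { intros w Xw; apply NNPP; intro Hn.
      destruct (@pigeon _ e1 e2 e3 w (a,l0) (c,l1) (b,l2)
                 (proj1 (HX _) Xw) (proj1 (HX _) Xa) (proj1 (HX _) Xc) (proj1 (HX _) Xb))
        as [h|[h|[h|[h|[h|h]]]]]; try discriminate; apply Hn; auto. }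
    assert (lac : lin a c).
    { destruct (classic (c = a)) as [ -> |ne]; [apply Lr|].
      destruct (Htot c a) as [h|h]; [|exact h].
      assert (E := Xanti (c,l1) (a,l0) Xc Xa (conj h ne)); discriminate. }
    assert (lcb : lin c b).
    { destruct (classic (b = c)) as [ -> |ne]; [apply Lr|].
      destruct (Htot b c) as [h|h]; [|exact h].
      assert (E := Xanti (b,l2) (c,l1) Xb Xc (conj h ne)); discriminate. }
    assert (ab : a = b).
    { apply NNPP; intro Hab.
      assert (Hc' : exists c', c' <> c /\ lin a c' /\ lin c' b /\ ~ le c' c /\ ~ le c c').
      { assert (Hx : exists x, x <> c /\ lin a x /\ lin x b).
        { destruct (classic (c = a)) as [ -> |ne].
          - exists b; split; [auto|split; auto].
          - exists a; split; [auto|split; eauto]. }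
        destruct Hx as [x [xc [lax lxb]]].
        destruct (classic (le x c)) as [hxc|nxc].
        { destruct (H x c (conj hxc xc)) as [z [[z1 z1'] [[z2 z2'] [[z3 z3'] [z4 z4']]]]].
          exists z; split; [auto|split; [eauto|split; [eauto|auto]]]. }
        destruct (classic (le c x)) as [hcx|ncx].
        { destruct (H c x (conj hcx (fun e => xc (eq_sym e))))
            as [z [[z1 z1'] [[z2 z2'] [[z3 z3'] [z4 z4']]]]].
          exists z; split; [auto|split; [eauto|split; [eauto|auto]]]. }
        exists x; auto. }
      destruct Hc' as [c' [nc [lac' [lcb' [n1 n2]]]]].
      assert (HY : antichain (Qr le lin) (fun w => X w \/ w = (c',l1))).
      { intros x y [Hx| -> ] [Hy| -> ] Hq.
        - apply Xanti; auto.
        - exfalso; destruct (memb x Hx) as [ -> | [ -> | -> ] ]; unfold Qr in Hq; simpl in Hq; eauto.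
        - exfalso; destruct (memb y Hy) as [ -> | [ -> | -> ] ]; unfold Qr in Hq; simpl in Hq; eauto.
        - reflexivity. }
      assert (E := Xmax _ HY (fun w h => or_introl h)).
      assert (Xc' : X (c',l1)) by (apply (proj2 (E (c',l1))); auto).
      destruct (memb _ Xc') as [h|[h|h]]; try discriminate.
      apply nc; congruence. }
    subst b.
    assert (ca : c = a) by (apply La; auto).
    subst c.
    exists a; intro w; split.
    + intros [ -> | [ -> | -> ] ]; auto.
    + intro Xw; unfold gA; destruct (memb w Xw) as [h|[h|h]]; auto.
  - intros u v E.
    destruct (proj1 (E (u,l0)) (or_introl eq_refl)) as [h|[h|h]]; congruence.
  - intros u v; split.
    + intros h x [ -> | [ -> | -> ] ].
      * exists (v,l0); split; [left; auto|]; unfold Qr; simpl; auto.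
      * destruct (classic (u = v)) as [ -> |ne].
        -- exists (v,l1); split; [right; left; auto|]; unfold Qr; simpl; auto.
        -- exists (v,l0); split; [left; auto|]; unfold Qr; simpl; split; auto.
      * exists (v,l2); split; [right; right; auto|]; unfold Qr; simpl; auto.
    + intro D. destruct (D (u,l0) (or_introl eq_refl)) as [y [Hy Hq]].
      destruct Hy as [ -> | [ -> | -> ] ]; unfold Qr in Hq; simpl in Hq; tauto.
Qed.
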